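(* Let $\mathcal{C}$ be a closed convex set with $\overline\Pi=\mathcal{C}\cap\Pi$ closed and convex, let $S=(x_1,\dots,x_m)$ be i.i.d. from $\mathcal{D}_{\mathcal{X}}$ with empirical distribution $\widehat{\mathcal{D}}_{\mathcal{X}}$, let $\mathcal{F}=\{x\mapsto\mathsf{B}_F(\pi(x)\parallel\pi_0(x)):\pi\in\overline\Pi\}\cup\{x\mapsto\mathsf{B}_F(\pi'(x)\parallel\pi(x)):\pi,\pi'\in\overline\Pi\}$ and $\epsilon_m=\sup_{f\in\mathcal{F}}|\mathbb{E}_{\mathcal{D}_{\mathcal{X}}}[f]-\mathbb{E}_{\widehat{\mathcal{D}}_{\mathcal{X}}}[f]|$. Let $\widehat\pi$ minimize $\mathbb{E}_{\mathcal{D}_{\mathcal{X}}}[\mathsf{B}_F(\pi(x)\parallel\pi_0(x))]$ and $\widehat\pi_S$ minimize $\mathbb{E}_{\widehat{\mathcal{D}}_{\mathcal{X}}}[\mathsf{B}_F(\pi(x)\parallel\pi_0(x))]$ over $\pi\in\overline\Pi$, and assume $\pi^*\in\overline\Pi$. Then $$\mathbb{E}_{\mathcal{D}_{\mathcal{X}}}[\mathsf{B}_F(\pi^*(x)\parallel\widehat\pi_S(x))]-\mathbb{E}_{\mathcal{D}_{\mathcal{X}}}[\mathsf{B}_F(\pi^*(x)\parallel\pi_0(x))]\le6\epsilon_m+\mathbb{E}_{\mathcal{D}_{\mathcal{X}}}[\mathsf{B}_F(\pi^*(x)\parallel\pi_0(x))]-2\,\mathbb{E}_{\mathcal{D}_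{\mathcal{X}}}[\mathsf{B}_F(\widehat\pi(x)\parallel\pi_0(x))].$$
   Context: $\mathcal{X},\mathcal{Y}$ finite; models are maps $\pi\colon\mathcal{X}\to\Delta(\mathcal{Y})$; $\Pi\subseteq\Delta(\mathcal{Y})^{\mathcal{X}}$ closed and convex; $\pi_0$ a baseline model; $\pi^*$ a reference model; $\mathcal{D}_{\mathcal{X}}$ a full-support distribution on $\mathcal{X}$. $F$ is convex and differentiable on the interior of its domain (containing $\Delta(\mathcal{Y})$, relevant values lying where $\nabla F$ is defined), $\mathsf{B}_F(p\parallel q)=F(p)-F(q)-\langle\nabla F(q),p-q\rangle$. *)

(* Defs.v *)
From HB Require Import structures.
From mathcomp Require Import all_boot all_order all_algebra.
From mathcomp Require Import all_classical all_reals all_analysis.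
Set Implicit Arguments. Unset Strict Implicit. Unset Printing Implicit Defensive.
Import Order.TTheory GRing.Theory Num.Theory.
Import numFieldNormedType.Exports.
Local Open Scope ring_scope.
Local Open Scope classical_set_scope.

Section Defs.
Variables (R : realType) (X Y : finType).

Definition simplex : set (Y -> R) :=
  [set p | (forall y, 0 <= p y) /\ \sum_y p y = 1].

Definition dotv (p q : Y -> R) : R := \sum_y p y * q y.

Definition supn (h : Y -> R) : R := \big[Num.max/0]_y `|h y|.

Definition convex_vset (D : set (Y -> R)) : Prop :=
  forall p q, D p -> D q -> forall t : R, 0 <= t <= 1 ->
    D (fun y => t * p y + (1 - t) * q y).

Definition convex_fun_on (D : set (Y -> R)) (F : (Y -> R) -> R) : Prop :=
  forall p q, D p -> D q -> forall t : R, 0 <= t <= 1 ->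
    F (fun y => t * p y + (1 - t) * q y) <= t * F p + (1 - t) * F q.

Definition vinterior (D : set (Y -> R)) : set (Y -> R) :=
  [set q | exists2 d : R, 0 < d &
     forall h : Y -> R, (forall y, `|h y| < d) -> D (fun y => q y + h y)].

Definition has_gradient (F : (Y -> R) -> R) (g q : Y -> R) : Prop :=
  forall e : R, 0 < e -> exists2 d : R, 0 < d &
    forall h : Y -> R, (forall y, `|h y| < d) ->
      `|F (fun y => q y + h y) - F q - dotv g h| <= e * supn h.

Definition bregman (F : (Y -> R) -> R) (gradF : (Y -> R) -> (Y -> R))
  (p q : Y -> R) : R :=
  F p - F q - dotv (gradF q) (fun y => p y - q y).

Definition models_set (P : set (X -> Y -> R)) : Prop :=
  forall pi, P pi -> forall x, simplex (pi x).

Definition convex_models (P : set (X -> Y -> R)) : Prop :=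
  forall p1 p2, P p1 -> P p2 -> forall t : R, 0 <= t <= 1 ->
    P (fun x y => t * p1 x y + (1 - t) * p2 x y).

(* closedness in R^(X x Y) (sequential closedness) *)
Definition closed_models (P : set (X -> Y -> R)) : Prop :=
  forall (u : nat -> X -> Y -> R) (pi : X -> Y -> R),
    (forall n, P (u n)) ->
    (forall x y, (fun n => u n x y) @ \oo --> pi x y) -> P pi.

Definition full_support_distr (D : X -> R) : Prop :=
  (forall x, 0 < D x) /\ \sum_x D x = 1.

Definition expect (D : X -> R) (f : X -> R) : R := \sum_x D x * f x.

Definition empirical_distr (m : nat) (S : 'I_m -> X) : X -> R :=
  fun x => #|[set i | S i == x]|%:R / m%:R.

Definition bregman_class (F : (Y -> R) -> R) (gradF : (Y -> R) -> (Y -> R))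
  (Pb : set (X -> Y -> R)) (pi0 : X -> Y -> R) : set (X -> R) :=
  [set f | (exists2 pi, Pb pi & f = (fun x => bregman F gradF (pi x) (pi0 x)))
        \/ (exists pi pi', [/\ Pb pi, Pb pi' &
              f = (fun x => bregman F gradF (pi' x) (pi x))])].

Definition unif_dev (D Dhat : X -> R) (Fam : set (X -> R)) : \bar R :=
  ereal_sup [set (`|expect D f - expect Dhat f|)%:E | f in Fam].

End Defs.

(* Main.v *)
Require Import Defs.
From HB Require Import structures.
From mathcomp Require Import all_boot all_order all_algebra.
From mathcomp Require Import all_classical all_reals all_analysis.
From mathcomp Require Import ring lra.
Import Order.TTheory GRing.Theory Num.Theory.
Import numFieldNormedType.Exports.
Local Open Scope ring_scope.
Local Open Scope classical_set_scope.

Section H.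
Variables (R : realType) (X Y : finType).
Implicit Types (p q r g : Y -> R).

Lemma three_point (F : (Y -> R) -> R) gradF p q r :
  bregman F gradF p r = bregman F gradF p q + bregman F gradF q r
    + dotv (fun y => gradF q y - gradF r y) (fun y => p y - q y).
Proof.
rewrite /bregman /dotv.
have -> : \sum_y gradF r y * (p y - r y) =
  \sum_y gradF q y * (p y - q y) + \sum_y gradF r y * (q y - r y)
  - \sum_y (gradF q y - gradF r y) * (p y - q y).
  rewrite -big_split -sumrB; apply: eq_bigr => y _ /=; ring.
ring.
Qed.

Lemma dotv_shift g q r (h : Y -> R) t :
  dotv g (fun y => (q y + t * h y) - r y) = dotv g (fun y => q y - r y) + t * dotv g h.
Proof.
rewrite /dotv mulr_sumr -big_split; apply: eq_bigr => y _ /=; ring.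
Qed.

Lemma dotvZ g (h : Y -> R) t : dotv g (fun y => t * h y) = t * dotv g h.
Proof. rewrite /dotv mulr_sumr; apply: eq_bigr => y _ /=; ring. Qed.

Lemma dotvB g g0 (h : Y -> R) :
  dotv (fun y => g y - g0 y) h = dotv g h - dotv g0 h.
Proof. rewrite /dotv -sumrB; apply: eq_bigr => y _ /=; ring. Qed.

Lemma supn_le (h : Y -> R) c : 0 <= c -> (forall y, `|h y| <= c) -> supn h <= c.
Proof. move=> c0 hc; rewrite /supn; exact: bigmax_le. Qed.

Lemma simplex_le1 p y : simplex p -> 0 <= p y <= 1.
Proof.
move=> [p0 p1]; rewrite p0 /=; rewrite -p1 (bigD1 y) //= lerDl.
by apply: sumr_ge0 => i _.
Qed.

Lemma opt (F : (Y -> R) -> R) gradF (w : X -> R) (q p r : X -> Y -> R) :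
  (forall x, 0 <= w x) ->
  (forall x y, `|p x y - q x y| <= 1) ->
  (forall x, has_gradient F (gradF (q x)) (q x)) ->
  (forall t, 0 < t -> t <= 1 ->
     \sum_x w x * bregman F gradF (q x) (r x) <=
     \sum_x w x * bregman F gradF (fun y => q x y + t * (p x y - q x y)) (r x)) ->
  0 <= \sum_x w x * dotv (fun y => gradF (q x) y - gradF (r x) y)
                         (fun y => p x y - q x y).
Proof.
move=> w0 hb hg hopt.
set A := \sum_x _.
set K := \sum_x w x.
have K0 : 0 <= K by apply: sumr_ge0.
have claim : forall e, 0 < e -> - (e * K) <= A.
  move=> e e0.
  have /choice [dx Hdx] : forall x, exists d : R, 0 < d /\ forall t, 0 < t -> t < d ->
     F (fun y => q x y + t * (p x y - q x y)) - F (q x)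
       - t * dotv (gradF (q x)) (fun y => p x y - q x y) <= e * t.
    move=> x; have [d d0 Hd] := hg x e e0.
    exists (Num.min d 1); split; first by rewrite lt_min d0 ltr01.
    move=> t t0; rewrite lt_min => /andP [td t1].
    have := Hd (fun y => t * (p x y - q x y)).
    rewrite dotvZ => H.
    have := ler_norm (F (fun y => q x y + t * (p x y - q x y)) - F (q x) -
             t * dotv (gradF (q x)) (fun y => p x y - q x y)).
    move=> /le_trans; apply.
    apply: (le_trans (H _)).
      move=> y; rewrite normrM gtr0_norm //.
      apply: (le_lt_trans _ td).
      have := hb x y; nra.
    rewrite ler_pM2l //; apply: supn_le; first exact: ltW.
    move=> y; rewrite normrM gtr0_norm //.
    have := hb x y; nra.
  set d0 := \big[Num.min/1]_x dx x.
  have d00 : 0 < d0 by apply: lt_bigmin => //= x _; case: (Hdx x).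
  have d01 : d0 <= 1 by apply: bigmin_le_id.
  have t0 : 0 < d0 / 2 by rewrite divr_gt0.
  have t1 : d0 / 2 <= 1.
    by rewrite ler_pdivrMr //; lra.
  have := hopt _ t0 t1.
  rewrite -subr_ge0 -sumrB => H.
  have : 0 <= \sum_x (w x * (e * (d0 / 2)) + (d0 / 2) * (w x * dotv (fun y => gradF (q x) y - gradF (r x) y)
                         (fun y => p x y - q x y))).
    apply: (le_trans H); apply: ler_sum => x _.
    rewrite -mulrBr [d0 / 2 * _]mulrCA -mulrDr; apply: ler_wpM2l => //.
    rewrite dotvB.
    have [_ Hx] := Hdx x.
    have tdx : d0 / 2 < dx x.
      have : d0 <= dx x by apply: bigmin_le.
      lra.
    have := Hx _ t0 tdx.
    rewrite /bregman dotv_shift.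
    set a := F _; set b := dotv _ _; set c := dotv _ _; set c' := dotv _ _.
    lra.
  rewrite big_split /= -mulr_suml -mulr_sumr -/A -/K => H2.
  have : 0 <= (d0 / 2) * (e * K + A) by lra.
  rewrite pmulr_rge0 //; lra.
rewrite leNgt; apply/negP => A0.
set e := - A / (K + 1).
have K1 : 0 < K + 1 by lra.
have e0 : 0 < e by rewrite divr_gt0 //; lra.
have eK : e * (K + 1) = - A by rewrite /e divfK // lt0r_neq0.
have := claim e e0.
lra.
Qed.

End H.

Theorem corollary2 (R : realType) (X Y : finType)
  (Dom : set (Y -> R)) (F : (Y -> R) -> R) (gradF : (Y -> R) -> (Y -> R))
  (Pi C : set (X -> Y -> R)) (pi0 pistar : X -> Y -> R) (DX : X -> R)
  (m : nat) (S : 'I_m -> X) (pihat pihatS : X -> Y -> R) :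
  convex_vset Dom -> (@simplex R Y) `<=` Dom -> convex_fun_on Dom F ->
  (forall q, vinterior Dom q -> has_gradient F (gradF q) q) ->
  models_set Pi -> closed_models Pi -> convex_models Pi ->
  (forall x, simplex (pi0 x)) ->
  full_support_distr DX ->
  closed_models C -> convex_models C ->
  closed_models (C `&` Pi) -> convex_models (C `&` Pi) ->
  (forall x, vinterior Dom (pi0 x)) ->
  (forall pi, (C `&` Pi) pi -> forall x, vinterior Dom (pi x)) ->
  (0 < m)%N ->
  (C `&` Pi) pistar ->
  (C `&` Pi) pihat ->
  (forall pi, (C `&` Pi) pi ->
     expect DX (fun x => bregman F gradF (pihat x) (pi0 x))
     <= expect DX (fun x => bregman F gradF (pi x) (pi0 x))) ->
  (C `&` Pi) pihatS ->
  (forall pi, (C `&` Pi) pi ->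
     expect (@empirical_distr R X m S) (fun x => bregman F gradF (pihatS x) (pi0 x))
     <= expect (@empirical_distr R X m S) (fun x => bregman F gradF (pi x) (pi0 x))) ->
  ((expect DX (fun x => bregman F gradF (pistar x) (pihatS x))
    - expect DX (fun x => bregman F gradF (pistar x) (pi0 x)))%:E
   <= 6%:E * unif_dev DX (@empirical_distr R X m S) (bregman_class F gradF (C `&` Pi) pi0)
      + (expect DX (fun x => bregman F gradF (pistar x) (pi0 x))
         - 2 * expect DX (fun x => bregman F gradF (pihat x) (pi0 x)))%:E)%E.
Proof.
move=> _ _ _ hgrad hmod _ _ _ _ _ _ _ hconv _ hint m0 hstar hhat hhatmin hS hSmin.
set Dh := @empirical_distr R X m S.
set Pb := C `&` Pi.
have Dh0 : forall x, 0 <= Dh x by move=> x; rewrite /Dh /empirical_distr divr_ge0.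
have hA := @opt R X Y F gradF Dh pihatS pistar pi0 Dh0.
have hA' : 0 <= \sum_x Dh x * dotv (fun y => gradF (pihatS x) y - gradF (pi0 x) y)
                         (fun y => pistar x y - pihatS x y).
  apply: hA.
  - move=> x y.
    have := simplex_le1 _ _ _ y (hmod _ hstar.2 x).
    have := simplex_le1 _ _ _ y (hmod _ hS.2 x).
    move=> /andP [a0 a1] /andP [b0 b1].
    rewrite ler_norml; apply/andP; split; lra.
  - by move=> x; apply: hgrad; apply: hint.
  - move=> t t0 t1.
    have hin := hconv _ _ hstar hS t ltac:(by rewrite (ltW t0) t1).
    have E : (fun x y => t * pistar x y + (1 - t) * pihatS x y) =
              (fun x y => pihatS x y + t * (pistar x y - pihatS x y)).
      by apply: funext => x; apply: funext => y; ring.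
    rewrite E in hin.
    exact: (hSmin _ hin).
set A := \sum_x _ in hA'.
have tp : expect Dh (fun x => bregman F gradF (pistar x) (pihatS x)) + A =
   expect Dh (fun x => bregman F gradF (pistar x) (pi0 x))
   - expect Dh (fun x => bregman F gradF (pihatS x) (pi0 x)).
  rewrite /expect /A -sumrB -big_split; apply: eq_bigr => x _ /=.
  rewrite (@three_point R Y F gradF (pistar x) (pihatS x) (pi0 x)); ring.
set eps := unif_dev _ _ _.
have ub : forall f, bregman_class F gradF Pb pi0 f ->
    ((`|expect DX f - expect Dh f|)%:E <= eps)%E.
  by move=> f hf; apply: ereal_sup_ubound; exists f.
have u1 := ub (fun x => bregman F gradF (pistar x) (pihatS x))
  ltac:(by right; exists pihatS, pistar; split).
have u2 := ub (fun x => bregman F gradF (pistar x) (pi0 x))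
  ltac:(by left; exists pistar).
have u3 := ub (fun x => bregman F gradF (pihatS x) (pi0 x))
  ltac:(by left; exists pihatS).
have m1 := hhatmin _ hstar.
have m2 := hhatmin _ hS.
have m3 := hSmin _ hstar.
clear ub; move: u1 u2 u3; case: eps => [r| |] u1 u2 u3.
- rewrite !lee_fin !ler_norml in u1 u2 u3.
  case/andP: u1 => u1 u1'; case/andP: u2 => u2 u2'; case/andP: u3 => u3 u3'.
  rewrite -EFinM -EFinD lee_fin.
  lra.
- by rewrite mulry gtr0_sg // mul1e addye // leey.
- by rewrite leeNy_eq in u1.
Qed.
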